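(* For every $\ell\ge1$ and $n\ge0$, the coproduct of $\gamma_{\ell,n}$ in $H^*(B\mathcal{S}_\bullet;\mathbb{F}_2)$ is $$\Delta\gamma_{\ell,n}=\sum_{i+j=n}\gamma_{\ell,i}\otimes\gamma_{\ell,j}.$$
   Context: $B\mathcal{S}_\bullet=\coprod_{n\ge0}B\mathcal{S}_n$, coefficients $\mathbb{F}_2$. $\Delta$ on $H^*(B\mathcal{S}_\bullet)$ is the linear dual of the product $*$ on $H_*(B\mathcal{S}_\bullet)$ induced by the block inclusions $\mathcal{S}_n\times\mathcal{S}_m\subset\mathcal{S}_{n+m}$. Let $\iota\in H_0(B\mathcal{S}_1)$ be nonzero, $q_i$ the Kudo–Araki (Dyer–Lashof) operations $H_d(B\mathcal{S}_n)\to H_{2d+i}(B\mathcal{S}_{2n})$, $q_I=q_{i_1}(\cdots q_{i_k}(\iota))$. By Nakaoka, $H_*(B\mathcal{S}_\bullet)$ is polynomial under $*$ on $\iota$ and the $q_I$ with $0<i_1\le\dots\le i_k$; for a monomial $\alpha$, $\alpha^\vee$ is the dual class in the monomial basis. With $q_{\ell\cdot1}=q_{(1,\dots,1)}$ ($\ell$ ones), $\gamma_{\ell,n}=((q_{\ell\cdot1})^{*n})^\vee\in H^{n(2^\ell-1)}(B\mathcal{S}_{n2^\ell})$; $\gamma_{\ell,0}=1_0$, the unit in $H^0(B\mathcal{S}_0)$. *)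

(* Defs.v *)
From HB Require Import structures.
From mathcomp Require Import all_boot all_order all_algebra.
From mathcomp Require Import finmap.
From mathcomp Require Import monalg.
Set Implicit Arguments. Unset Strict Implicit. Unset Printing Implicit Defensive.
Import GRing.Theory.
Local Open Scope ring_scope.

(* Nakaoka generators of H_*(BS_bullet; F_2) as a polynomial algebra:
   q_I for I = (i_1,...,i_k) with 0 < i_1 <= ... <= i_k, where the empty
   sequence I = [::] stands for q_{()} = iota.                                 *)
Definition admissible (s : seq nat) : bool := all (leq 1) s && sorted leq s.
Definition Gen := {s : seq nat | admissible s}.

(* H_*(BS_bullet; F_2) with the product * : the polynomial (free commutative)
   F_2-algebra on the Nakaoka generators.  Basis = monomials {cmonom Gen}.   *)
Definition Mon := {cmonom Gen}.
Definition HS := {malg 'F_2[Mon]}.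

Definition star (x y : HS) : HS := x * y.

(* Cohomology classes are viewed as (linear) functionals on homology;
   alpha^vee = dual of the monomial alpha in the monomial basis.             *)
Definition dualmon (a : Mon) : HS -> 'F_2 := fun x => x@_a.

(* Delta = linear dual of *, seen as a bilinear form on H_* (x) H_*.        *)
Definition coprod (phi : HS -> 'F_2) : HS -> HS -> 'F_2 :=
  fun x y => phi (star x y).

Definition tens (phi psi : HS -> 'F_2) : HS -> HS -> 'F_2 :=
  fun x y => phi x * psi y.

Lemma admissible_ones (l : nat) : admissible (nseq l 1%N).
Proof.
rewrite /admissible; apply/andP; split.
  by apply/allP=> x /nseqP [-> _].
by elim: l => [|[|l] IH] //=.
Qed.
Definition q_ones (l : nat) : Gen := exist _ (nseq l 1%N) (admissible_ones l).

Definition qmon (l n : nat) : Mon := expcmn (ucm (q_ones l)) n.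

Definition gamma (l n : nat) : HS -> 'F_2 := dualmon (qmon l n).

(* Main.v *)
Require Import Defs.
From mathcomp Require Import all_boot all_order all_algebra.
From mathcomp Require Import finmap monalg.
Import GRing.Theory.
Local Open Scope ring_scope.
Lemma iteropSS T n (op : T -> T -> T) x x0 :
  iterop n.+2 op x x0 = op x (iterop n.+1 op x x0).
Proof. by []. Qed.
Lemma qmonE l k i : qmon l k i = (k * (q_ones l == i))%N.
Proof.
rewrite /qmon /expcmn; case: k => [|k]; first by rewrite onecmE.
elim: k => [|k IH]; first by rewrite /= ucmE mul1n.
by rewrite iteropSS mulcmE IH ucmE mulSn.
Qed.

Lemma qmon_inj l a b : qmon l a = qmon l b -> a = b.
Proof.
move/(congr1 (fun m : Mon => m (q_ones l))); by rewrite !qmonE eqxx !muln1.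
Qed.

Lemma key l n (k1 k2 : Mon) :
  nat_of_bool (mmul k1 k2 == qmon l n) =
  (\sum_(i < n.+1) ((k1 == qmon l i) && (k2 == qmon l (n - i))))%N.
Proof.
set g := q_ones l.
have Hb : forall (k : Mon), (forall j, j != g -> k j = 0%N) -> k = qmon l (k g).
  move=> k Hk; apply/eqP/cmP=> j; rewrite qmonE.
  case: (eqVneq g j) => [<-|ne]; first by rewrite muln1.
  by rewrite muln0 Hk // eq_sym.
case: eqP => [E|NE].
  have H0 : forall j, j != g -> (k1 j = 0 /\ k2 j = 0)%N.
    move=> j ne; move/(congr1 (fun m : Mon => m j)): E.
    rewrite cmM qmonE eq_sym (negbTE ne) muln0.
    by move/eqP; rewrite addn_eq0 => /andP[/eqP -> /eqP ->].
  have E1 := Hb k1 (fun j ne => (H0 j ne).1).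
  have E2 := Hb k2 (fun j ne => (H0 j ne).2).
  have Es : (k1 g + k2 g = n)%N.
    by move/(congr1 (fun m : Mon => m g)): E; rewrite cmM qmonE eqxx muln1.
  have Ha : (k1 g < n.+1)%N by rewrite ltnS -Es leq_addr.
  rewrite (bigD1 (Ordinal Ha)) //= {1}E1 eqxx /= {1}E2 (_ : n - k1 g = k2 g)%N ?eqxx /=; last by rewrite -Es addKn.
  rewrite big1 // => i /eqP ne; case: andP => // -[/eqP e _].
  exfalso; apply: ne; apply: val_inj => /=; apply: (@qmon_inj l); by rewrite -E1 e.
rewrite big1 // => i _; case: andP => // -[/eqP e1 /eqP e2].
exfalso; apply: NE; rewrite e1 e2; apply/eqP/cmP => j.
rewrite cmM !qmonE -mulnDl subnKC //; by rewrite -ltnS.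
Qed.

Lemma coefE (x : HS) (k : Mon) : x@_k = \sum_(k1 <- msupp x) x@_k1 *+ (k1 == k).
Proof.
case: (boolP (k \in msupp x)) => H.
  rewrite (bigD1_seq k) //= ?fset_uniq // eqxx GRing.mulr1n big1 ?GRing.addr0 // => i /negbTE.
  by rewrite eq_sym => ->.
rewrite mcoeff_outdom // big1_seq // => i /andP[_ Hi].
case: eqP => [E|_]; last by [].
by move: H; rewrite -E Hi.
Qed.

Theorem mainTheorem7 (l n : nat) : (1 <= l)%N ->
  forall x y : HS,
    coprod (gamma l n) x y =
    \sum_(i < n.+1) tens (gamma l i) (gamma l (n - i)) x y.
Proof.
move=> _ x y; rewrite /coprod /star /tens /gamma /dualmon mcoeffMl.
have -> : \sum_(i < n.+1) x@_(qmon l i) * y@_(qmon l (n - i)) =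
  \sum_(i < n.+1) \sum_(k1 <- msupp x) \sum_(k2 <- msupp y)
     (x@_k1 * y@_k2) *+ ((k1 == qmon l i) && (k2 == qmon l (n - i))).
  apply: eq_bigr => i _; rewrite (coefE x) (coefE y) mulr_suml.
  apply: eq_bigr => k1 _; rewrite mulr_sumr; apply: eq_bigr => k2 _.
  by rewrite mulrnAl mulrnAr -mulrnA mulnC mulnb.
rewrite [RHS]exchange_big; apply: eq_bigr => k1 _.
rewrite exchange_big; apply: eq_bigr => k2 _.
by rewrite sumrMnr key.
Qed.
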